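(* Let $\mathcal{B}=\{e_k\}_{k=1}^\infty$ be a seminormalized quasi-greedy basis of a real Banach space $\mathbb{B}$ with quasi-greedy constant $K$. There is a constant $C>0$, independent of $\Gamma$ and $x$, such that for every finite $\Gamma\subset\mathbb N$ and every $x\in\mathbb B$, $$\|S_\Gamma(x)\|_{\mathbb B}\le C\,(8K^4)\Big(\sum_{k=1}^{|\Gamma|}\mu(k)\frac1k\Big)\|x\|_{\mathbb B}.$$
   Context: $\mathcal B$ seminormalized: $0<\inf_k\|e_k\|\le\sup_k\|e_k\|<\infty$; each $x$ has unique expansion $x=\sum_k a_k(x)e_k$, and $S_\Gamma(x)=\sum_{k\in\Gamma}a_k(x)e_k$. For a greedy ordering $\pi$ of $x$ (bijection with $|a_{\pi(k)}(x)|$ nonincreasing), $G_N(x)=\sum_{k=1}^N a_{\pi(k)}(x)e_{\pi(k)}$. Quasi-greedy means $G_N(x)\to x$ for all $x$; $K$ is the least constant with $\|G_N(x)\|\le K\|x\|$ and $\|x-G_N(x)\|\le K\|x\|$ for all $x,N$. $h_r(N)=\sup_{|\Gamma|=N}\|\sum_{k\in\Gamma}e_k\|$, $h_l(N)=\inf_{|\Gamma|=N}\|\sum_{k\in\Gamma}e_k\|$, $\mu(N)=\sup_{1\le k\le N}h_r(k)/h_l(k)$. *)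

(* Defs.v *)
From mathcomp Require Import all_boot all_order all_algebra.
From mathcomp Require Import all_classical all_reals all_analysis.
Set Implicit Arguments. Unset Strict Implicit. Unset Printing Implicit Defensive.
Import Order.TTheory GRing.Theory Num.Theory.
Import numFieldNormedType.Exports.
Local Open Scope classical_set_scope.
Local Open Scope ring_scope.

Section Defs.
Variables (R : realType) (V : normedModType R).

Definition partial_sum (e : nat -> V) (b : nat -> R) (n : nat) : V :=
  \sum_(k < n) b k *: e k.

Definition is_basis_coefs (e : nat -> V) (a : V -> nat -> R) : Prop :=
  (forall x : V, partial_sum e (a x) @ \oo --> x) /\
  (forall (x : V) (b : nat -> R), partial_sum e b @ \oo --> x -> b = a x).

Definition seminormalized (e : nat -> V) : Prop :=
  exists c1 c2 : R, 0 < c1 /\ forall k, c1 <= `|e k| <= c2.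

(* S_Gamma(x), Gamma a finite set of indices given by a duplicate-free list *)
Definition S_proj (e : nat -> V) (a : V -> nat -> R) (G : seq nat) (x : V) : V :=
  \sum_(k <- G) a x k *: e k.

Definition greedy_ordering (a : V -> nat -> R) (x : V) (pi : nat -> nat) : Prop :=
  bijective pi /\ forall i j : nat, (i <= j)%N -> `|a x (pi j)| <= `|a x (pi i)|.

Definition greedy_approx (e : nat -> V) (a : V -> nat -> R) (pi : nat -> nat)
  (x : V) (N : nat) : V := \sum_(k < N) a x (pi k) *: e (pi k).

Definition quasi_greedy (e : nat -> V) (a : V -> nat -> R) : Prop :=
  forall x pi, greedy_ordering a x pi -> greedy_approx e a pi x @ \oo --> x.

Definition qg_bound (e : nat -> V) (a : V -> nat -> R) (K : R) : Prop :=
  forall x pi N, greedy_ordering a x pi ->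
    `|greedy_approx e a pi x N| <= K * `|x| /\
    `|x - greedy_approx e a pi x N| <= K * `|x|.

Definition qg_constant (e : nat -> V) (a : V -> nat -> R) (K : R) : Prop :=
  qg_bound e a K /\ forall K', qg_bound e a K' -> K <= K'.

Definition indicator_norms (e : nat -> V) (N : nat) : set R :=
  [set r | exists G : seq nat, [/\ uniq G, size G = N & r = `|\sum_(k <- G) e k|]].

Definition h_r (e : nat -> V) (N : nat) : R := sup (indicator_norms e N).
Definition h_l (e : nat -> V) (N : nat) : R := inf (indicator_norms e N).

Definition mu (e : nat -> V) (N : nat) : R :=
  \big[Num.max/0]_(1 <= k < N.+1) (h_r e k / h_l e k).

End Defs.

(* Main.v *)
Require Import Defs.
From mathcomp Require Import all_boot all_order all_algebra.
From mathcomp Require Import all_classical all_reals all_analysis.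
From mathcomp Require Import ring lra zify.
Import Order.TTheory GRing.Theory Num.Theory.
Import numFieldNormedType.Exports.
Local Open Scope ring_scope.

Lemma pairwise_all2 (T : eqType) (r : rel T) (s : seq T) :
  uniq s -> (forall x y, x \in s -> y \in s -> x != y -> r x y) -> pairwise r s.
Proof.
elim: s => [//|z s IH] /= /andP[zs us] H; apply/andP; split.
  apply/allP => y ys; apply: H; rewrite ?inE ?eqxx ?ys ?orbT //.
  by apply/negP => /eqP zy; rewrite zy ys in zs.
apply: IH => // x y xs ys; apply: H; by rewrite inE ?xs ?ys orbT.
Qed.

Lemma pw_take (T : Type) (r : rel T) (s : seq T) n : pairwise r s -> pairwise r (take n s).
Proof. by rewrite -{1}(cat_take_drop n s) pairwise_cat => /and3P[]. Qed.
Lemma pw_drop (T : Type) (r : rel T) (s : seq T) n : pairwise r s -> pairwise r (drop n s).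
Proof. by rewrite -{1}(cat_take_drop n s) pairwise_cat => /and3P[]. Qed.

Lemma half_aux n : (n <= 2 * (n.+1 - (n./2).+1))%N. Proof. lia. Qed.
Lemma half_lt n : (0 < n)%N -> (n./2 < n)%N. Proof. lia. Qed.
Lemma half_rest n : (n - n./2 <= (n./2).+1)%N. Proof. lia. Qed.

Section S.
Variables (R : realType) (V : normedModType R) (e : nat -> V) (a : V -> nat -> R) (K : R).
Hypothesis hB : is_basis_coefs e a.
Hypothesis hQG : qg_bound e a K.

Lemma coefB (c : nat -> R) M : (forall k, (M <= k)%N -> c k = 0) ->
  a (\sum_(k < M) c k *: e k) = c.
Proof.
move=> hc; symmetry; apply: hB.2; apply: cvg_near_cst.
near=> N.
have hN : (M <= N)%N by near: N; exists M.
rewrite /partial_sum -!(big_mkord xpredT (fun k => c k *: e k)).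
rewrite (big_cat_nat (leq0n M) hN) /= [X in _ + X]big1_seq ?addr0 //.
by move=> k /andP[_]; rewrite mem_index_iota => /andP[kM _]; rewrite (hc k kM) scale0r.
Unshelve. all: by end_near.
Qed.

Lemma GL (c : nat -> R) M (s : seq nat) N :
  (forall k, (M <= k)%N -> c k = 0) -> perm_eq s (iota 0 M) ->
  pairwise (fun i j => `|c j| <= `|c i|) s -> (N <= M)%N ->
  `|\sum_(k <- take N s) c k *: e k| <= K * `|\sum_(k < M) c k *: e k|.
Proof.
move=> hc ps pw NM.
set y := \sum_(k < M) c k *: e k.
have ay : a y = c by apply: coefB.
have ss : size s = M by rewrite (perm_size ps) size_iota.
have us : uniq s by rewrite (perm_uniq ps) iota_uniq.
have ms : forall k, (k \in s) = (k < M)%N by move=> k; rewrite (perm_mem ps) mem_iota.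
pose pi k := if (k < M)%N then nth 0%N s k else k.
pose pi' k := if (k < M)%N then index k s else k.
have hg : greedy_ordering a y pi.
  split.
    exists pi' => k; rewrite /pi /pi'; case: (ltnP k M) => kM.
    - have : nth 0%N s k \in s by rewrite mem_nth ?ss.
      rewrite ms => ->; rewrite index_uniq ?ss //.
    - by rewrite ltnNge kM.
    - have : (index k s < M)%N by rewrite -ss index_mem ms.
      by move=> ->; rewrite nth_index ?ms.
    - by rewrite ltnNge kM.
  move=> i j ij; rewrite ay /pi.
  case: (ltnP j M) => jM.
    rewrite (leq_ltn_trans ij jM).
    move: ij; rewrite leq_eqVlt => /orP[/eqP -> //|ij].
    by move/pairwiseP: pw => /(_ 0%N i j); apply; rewrite ?inE ?ss // (ltn_trans ij jM).
  rewrite hc // normr0; by case: ifP.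
have [h1 _] := hQG y pi N hg.
apply: le_trans h1; rewrite /greedy_approx ay le_eqVlt; apply/orP; left; apply/eqP.
congr (`|_|).
rewrite (big_nth 0%N) size_take ss.
have -> : (if (N < M)%N then N else M) = N by case: ltngtP NM => // ->.
rewrite big_mkord; apply: eq_bigr => i _.
rewrite nth_take // /pi (leq_trans (ltn_ord i) NM) //.
Qed.

Lemma GLD (Q : seq nat) (d : nat -> R) N : uniq Q ->
  (forall k, k \in Q -> `|d k| = 1) -> (N <= size Q)%N ->
  `|\sum_(k <- take N Q) d k *: e k| <= K * `|\sum_(k <- Q) d k *: e k|.
Proof.
move=> uQ hd NQ.
pose M := (\max_(k <- Q) k).+1.
have QM : forall k, k \in Q -> (k < M)%N by move=> k kQ; rewrite ltnS; exact: (@leq_bigmax_seq _ _ xpredT (fun k => k) k kQ).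
pose c k := if k \in Q then d k else 0.
pose s := Q ++ [seq i <- iota 0 M | i \notin Q].
have hc : forall k, (M <= k)%N -> c k = 0.
  move=> k kM; rewrite /c; case: ifP => // /QM; by rewrite ltnNge kM.
have us : uniq s.
  rewrite cat_uniq uQ filter_uniq ?iota_uniq // andbT.
  by apply/hasPn => x; rewrite mem_filter => /andP[].
have ps : perm_eq s (iota 0 M).
  apply: uniq_perm => //; first exact: iota_uniq.
  move=> x; rewrite mem_cat mem_filter mem_iota /=.
  by case xQ: (x \in Q) => //=; rewrite (QM _ xQ).
have cf : forall y, y \in [seq i <- iota 0 M | i \notin Q] -> c y = 0.
  by move=> y; rewrite mem_filter => /andP[/negbTE yQ _]; rewrite /c yQ.
have pw : pairwise (fun i j => `|c j| <= `|c i|) s.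
  rewrite pairwise_cat; apply/and3P; split.
  - by apply/allrelP => x y _ /cf ->; rewrite normr0 normr_ge0.
  - by apply: pairwise_all2 => // x y xQ yQ _; rewrite /c xQ yQ !hd.
  - apply: pairwise_all2; first by rewrite filter_uniq ?iota_uniq.
    by move=> x y _ /cf -> _; rewrite normr0 normr_ge0.
have NM : (N <= M)%N.
  apply: (leq_trans NQ); rewrite -(size_iota 0 M); apply: uniq_leq_size => // x /QM.
  by rewrite mem_iota.
have := @GL c M s N hc ps pw NM.
rewrite /s takel_cat //.
have -> : \sum_(k <- take N Q) c k *: e k = \sum_(k <- take N Q) d k *: e k.
  by apply: eq_big_seq => k /mem_take kQ; rewrite /c kQ.
have -> // : \sum_(k < M) c k *: e k = \sum_(k <- Q) d k *: e k.
rewrite -(big_mkord xpredT (fun k => c k *: e k)) /index_iota subn0 -(perm_big _ ps).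
rewrite big_cat /= [X in _ + X]big1_seq ?addr0.
  by apply: eq_big_seq => k kQ; rewrite /c kQ.
by move=> k /andP[_] /cf ->; rewrite scale0r.
Qed.


Variables (c1 c2 : R).
Hypothesis c1pos : 0 < c1.
Hypothesis hce : forall k, c1 <= `|e k| <= c2.

Lemma sum_e_le (Q : seq nat) : `|\sum_(k <- Q) e k| <= (size Q)%:R * c2.
Proof.
elim: Q => [|q Q IH]; first by rewrite big_nil normr0 mul0r.
rewrite big_cons /= (le_trans (ler_normD _ _)) // -addn1 natrD mulrDl mul1r addrC.
by rewrite lerD // ; case/andP: (hce q).
Qed.

Lemma indic_sup n : has_sup (indicator_norms e n).
Proof.
split; first by exists (`|\sum_(k <- iota 0 n) e k|); exists (iota 0 n); rewrite iota_uniq size_iota.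
exists (n%:R * c2) => r [Q [uQ sQ ->]]; by rewrite -sQ sum_e_le.
Qed.

Lemma hr_ub (Q : seq nat) : uniq Q -> `|\sum_(k <- Q) e k| <= h_r e (size Q).
Proof. move=> uQ; apply: sup_upper_bound; first exact: indic_sup. by exists Q. Qed.

Lemma hl_lb (Q : seq nat) : uniq Q -> h_l e (size Q) <= `|\sum_(k <- Q) e k|.
Proof.
move=> uQ; apply: ge_inf; last by exists Q.
by exists 0 => r [Q' [_ _ ->]].
Qed.

Lemma ek_le (Q : seq nat) q : uniq Q -> q \in Q -> c1 <= K * `|\sum_(k <- Q) e k|.
Proof.
move=> uQ qQ.
have := @GLD (q :: rem q Q) (fun _ => 1) 1%N.
rewrite /= mem_rem_uniqF // rem_uniq // => /(_ isT (fun _ _ => normr1 _) isT).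
rewrite take0 big_cons big_nil addr0 scale1r.
under eq_bigr do rewrite scale1r.
rewrite (perm_big Q); last by rewrite perm_sym perm_to_rem. move=> h.
by apply: le_trans h; case/andP: (hce q).
Qed.

Lemma Kpos : 0 < K.
Proof.
have := @ek_le [:: 0%N] 0%N isT (mem_head _ _).
have n0 := normr_ge0 (\sum_(k <- [:: 0%N]) e k).
move=> h; have hp : 0 < K * `|\sum_(k <- [:: 0%N]) e k| by apply: lt_le_trans h.
have hs : 0 < `|\sum_(k <- [:: 0%N]) e k|.
  rewrite lt_neqAle n0 andbT; apply/eqP => h0; move: hp; by rewrite -h0 mulr0 ltxx.
by rewrite pmulr_lgt0 in hp.
Qed.


Lemma hl_pos m : (0 < m)%N -> 0 < h_l e m.
Proof.
move=> m0; apply: (@lt_le_trans _ _ (c1 / K)); first by rewrite divr_gt0 // Kpos.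
apply: lb_le_inf.
  by exists (`|\sum_(k <- iota 0 m) e k|); exists (iota 0 m); rewrite iota_uniq size_iota.
move=> r [Q [uQ sQ ->]].
have qQ : nth 0%N Q 0 \in Q by rewrite mem_nth // sQ.
by rewrite ler_pdivrMr ?Kpos // mulrC (@ek_le Q _ uQ qQ).
Qed.

Lemma mu_ge m n : (0 < m)%N -> (m <= n)%N -> h_r e m / h_l e m <= mu e n.
Proof.
move=> m0 mn; rewrite /mu.
apply: (@le_bigmax_seq _ _ _ (index_iota 1 n.+1) 0 m xpredT (fun k => h_r e k / h_l e k)) => //.
by rewrite mem_index_iota m0 ltnS.
Qed.

Lemma mu_mono m n : (m <= n)%N -> mu e m <= mu e n.
Proof. move=> mn; rewrite /mu; apply: le_bigmax_nat => //. Qed.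

Lemma mu_ge0 n : 0 <= mu e n.
Proof. by have := @mu_mono 0 n (leq0n n); rewrite /mu big_geq. Qed.

Lemma hr_le_mu m n : (0 < m)%N -> (m <= n)%N -> h_r e m <= mu e n * h_l e m.
Proof. move=> m0 mn; rewrite -ler_pdivrMr ?hl_pos //; exact: mu_ge. Qed.


Lemma Abel_pre (l : seq nat) (be : nat -> R) (v : nat -> V) (b0 B : R) :
  0 <= B -> 0 <= b0 -> pairwise (fun i j => be j <= be i) l ->
  (forall k, k \in l -> 0 <= be k <= b0) ->
  (forall j, `|\sum_(k <- take j l) v k| <= B) ->
  `|\sum_(k <- l) be k *: v k| <= b0 * B.
Proof.
move=> B0; elim/last_ind: l be b0 => [|l z IH] be b0 b00 pw hb hp.
  by rewrite big_nil normr0 mulr_ge0.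
have zl : z \in rcons l z by rewrite mem_rcons mem_head.
have [bz0 bzb] := andP (hb z zl).
move: pw; rewrite pairwise_rcons => /andP[/allP al pw].
have -> : \sum_(k <- rcons l z) be k *: v k =
  \sum_(k <- l) (be k - be z) *: v k + be z *: \sum_(k <- rcons l z) v k.
  rewrite -cats1 !big_cat /= !big_seq1 scalerDr addrA; congr (_ + _).
  by rewrite scaler_sumr -big_split /=; apply: eq_bigr => k _; rewrite scalerBl subrK.
rewrite (le_trans (ler_normD _ _)) // normrZ ger0_norm //.
have -> : b0 * B = (b0 - be z) * B + be z * B by rewrite -mulrDl subrK.
apply: lerD; last first.
  by apply: ler_wpM2l => //; have := hp (size (rcons l z)); rewrite take_size.
apply: IH.
- by rewrite subr_ge0.
- move: pw; apply: sub_pairwise => i j /=; by rewrite lerD2r.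
- move=> k kl; rewrite lerD2r subr_ge0 al //=.
  have kz : k \in rcons l z by rewrite mem_rcons inE kl orbT.
  by have /andP[_ ->] := hb k kz.
- move=> j; case: (leqP j (size l)) => jl.
    by have := hp j; rewrite -cats1 takel_cat.
  by rewrite take_oversize ?(ltnW jl) //; have := hp (size l); rewrite -cats1 takel_cat // take_size.
Qed.

Lemma Abel_tail (l : seq nat) (be : nat -> R) (v : nat -> V) (b0 B : R) :
  0 <= B -> 0 <= b0 -> pairwise (fun i j => be i <= be j) l ->
  (forall k, k \in l -> 0 <= be k <= b0) ->
  (forall j, `|\sum_(k <- drop j l) v k| <= B) ->
  `|\sum_(k <- l) be k *: v k| <= b0 * B.
Proof.
move=> B0; elim: l be b0 => [|z l IH] be b0 b00 pw hb hp.
  by rewrite big_nil normr0 mulr_ge0.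
have [bz0 bzb] := andP (hb z (mem_head _ _)).
move: pw; rewrite pairwise_cons => /andP[/allP al pw].
have -> : \sum_(k <- z :: l) be k *: v k =
  \sum_(k <- l) (be k - be z) *: v k + be z *: \sum_(k <- z :: l) v k.
  rewrite !big_cons scalerDr addrCA; congr (_ + _).
  by rewrite scaler_sumr -big_split /=; apply: eq_bigr => k _; rewrite scalerBl subrK.
rewrite (le_trans (ler_normD _ _)) // normrZ ger0_norm //.
have -> : b0 * B = (b0 - be z) * B + be z * B by rewrite -mulrDl subrK.
apply: lerD; last first.
  by apply: ler_wpM2l => //; have := hp 0%N; rewrite drop0.
apply: IH.
- by rewrite subr_ge0.
- move: pw; apply: sub_pairwise => i j /=; by rewrite lerD2r.
- move=> k kl; rewrite lerD2r subr_ge0 al //=.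
  have kz : k \in z :: l by rewrite inE kl orbT.
  by have /andP[_ ->] := hb k kz.
- by move=> j; have := hp j.+1.
Qed.


Lemma hr_ge0 m : 0 <= h_r e m.
Proof.
apply: le_trans (normr_ge0 (\sum_(k <- iota 0 m) e k)) _.
by have := @hr_ub (iota 0 m) (iota_uniq 0 m); rewrite size_iota.
Qed.

Lemma ext_le (P T : seq nat) m : uniq P -> uniq T -> (forall k, k \in P -> k \notin T) ->
  (size P <= m)%N -> (m <= size P + size T)%N \/ P = [::] ->
  `|\sum_(k <- P) e k| <= K * h_r e m.
Proof.
move=> uP uT dPT Pm [hm|->]; last by rewrite big_nil normr0 mulr_ge0 ?hr_ge0 ?ltW ?Kpos.
pose Q := P ++ take (m - size P) T.
have uQ : uniq Q.
  rewrite cat_uniq uP take_uniq // andbT; apply/hasPn => x /mem_take xT.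
  by apply/negP => /dPT; rewrite xT.
have sQ : size Q = m.
  rewrite size_cat size_takel ?subnKC // leq_subLR //.
have := @GLD Q (fun _ => 1) (size P) uQ (fun _ _ => normr1 _).
rewrite sQ take_size_cat // => /(_ Pm).
under eq_bigr do rewrite scale1r. under [X in _ <= K * `|X|]eq_bigr do rewrite scale1r.
move=> h; apply: (le_trans h); apply: ler_wpM2l; first exact: ltW Kpos.
by have := @hr_ub Q uQ; rewrite sQ.
Qed.

Lemma part_le (A : seq nat) (d : nat -> R) (p : pred nat) : uniq A ->
  (forall k, k \in A -> `|d k| = 1) ->
  `|\sum_(k <- [seq x <- A | p x]) d k *: e k| <= K * `|\sum_(k <- A) d k *: e k|.
Proof.
move=> uA hd.
pose Q := [seq x <- A | p x] ++ [seq x <- A | predC p x].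
have pQ : perm_eq Q A by rewrite perm_filterC.
have uQ : uniq Q by rewrite (perm_uniq pQ).
have := @GLD Q d (size [seq x <- A | p x]) uQ.
rewrite take_size_cat // (perm_big _ pQ); apply.
  by move=> k; rewrite (perm_mem pQ); apply: hd.
by rewrite size_cat leq_addr.
Qed.

Lemma sg_split (P : seq nat) (c : nat -> R) :
  \sum_(k <- P) Num.sg (c k) *: e k =
  \sum_(k <- [seq x <- P | 0 < c x]) e k - \sum_(k <- [seq x <- P | c x < 0]) e k.
Proof.
rewrite !big_filter (bigID (fun k => 0 < c k)) /=.
rewrite [X in _ + X](bigID (fun k => c k < 0)) /= [X in _ + (_ + X)]big1; last first.
  move=> k /andP[/negbTE h1 /negbTE h2].
  have -> : c k = 0 by apply/eqP; rewrite eq_le !leNgt h1 h2.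
  by rewrite sgr0 scale0r.
rewrite addr0 -sumrN; congr (_ + _).
  by apply: eq_bigr => k /gtr0_sg ->; rewrite scale1r.
apply: eq_big => [k|k /andP[_ /ltr0_sg ->]]; last by rewrite scaleN1r.
by case: (ltrgt0P (c k)).
Qed.


Lemma TL (c : nat -> R) M (s : seq nat) j :
  (forall k, (M <= k)%N -> c k = 0) -> perm_eq s (iota 0 M) ->
  pairwise (fun i j => `|c j| <= `|c i|) s -> (j < M)%N ->
  `|c (nth 0%N s j)| * h_l e j.+1 <= 4 * K ^+ 2 * `|\sum_(k < M) c k *: e k|.
Proof.
move=> hc ps pw jM.
set y := \sum_(k < M) c k *: e k.
set t := `|c (nth 0%N s j)|.
have K0 := Kpos.
have ss : size s = M by rewrite (perm_size ps) size_iota.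
have us : uniq s by rewrite (perm_uniq ps) iota_uniq.
have y0 := normr_ge0 y.
have := normr_ge0 (c (nth 0%N s j)); rewrite le_eqVlt => /orP[/eqP t0|tpos].
  rewrite /t -t0 mul0r; apply: mulr_ge0 => //; apply: mulr_ge0 => //.
  by rewrite exprn_ge0 // ltW.
pose A := take j.+1 s.
have sA : size A = j.+1 by rewrite size_takel // ss.
have uA : uniq A by rewrite take_uniq.
have pwA : pairwise (fun i j => `|c j| <= `|c i|) A by apply: pw_take.
have hA : forall k, k \in A -> t <= `|c k|.
  move=> k kA; have ki := index_ltn kA; have ks : k \in s := mem_take kA.
  rewrite -(nth_index 0%N ks) /t.
  move: ki; rewrite ltnS leq_eqVlt => /orP[/eqP ->//|lt].
  by move/pairwiseP: pw => /(_ 0%N (index k s) j); apply; rewrite ?inE ?index_mem ?ss.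
have cA : forall k, k \in A -> `|c k| != 0.
  by move=> k kA; rewrite gt_eqF // (lt_le_trans tpos (hA k kA)).
have cpos : forall k, k \in A -> 0 < `|c k|.
  by move=> k kA; rewrite (lt_le_trans tpos (hA k kA)).
have T1 : `|\sum_(k <- A) (t / `|c k|) *: (c k *: e k)| <= 1 * (2 * K * `|y|).
  apply: Abel_tail => //.
  - by apply: mulr_ge0 => //; rewrite mulr_ge0 // ltW.
  - apply: (sub_in_pairwise (P := mem A)) pwA; last by apply/allP.
    move=> i k iA kA /= hik; apply: ler_wpM2l; first exact: ltW.
    by rewrite lef_pV2 ?posrE ?cpos.
  - move=> k kA; rewrite divr_ge0 ?(ltW tpos) //= ler_pdivrMr ?cpos // mul1r; exact: hA.
  - move=> i; have := cat_take_drop i A; move=> /(congr1 (fun l => \sum_(k <- l) c k *: e k)).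
    rewrite big_cat /= => hs.
    have -> : \sum_(k <- drop i A) c k *: e k =
      \sum_(k <- A) c k *: e k - \sum_(k <- take i A) c k *: e k.
      by rewrite -hs addrC addrK.
    rewrite (le_trans (ler_normB _ _)) // mulrDl mul1r.
    rewrite mulrDl; apply: lerD; first by apply: (@GL c M s j.+1).
    rewrite /A -take_min; apply: (@GL c M s) => //.
    by rewrite geq_min jM orbT.
have eqA : \sum_(k <- A) (t / `|c k|) *: (c k *: e k) =
    t *: \sum_(k <- A) Num.sg (c k) *: e k.
  rewrite scaler_sumr; apply: eq_big_seq => k kA; rewrite !scalerA; congr (_ *: _).
  by rewrite [X in _ / _ * X = _](numEsg (c k)) mulrCA divfK ?cA // mulrC.
rewrite eqA normrZ ger0_norm ?(ltW tpos) // mul1r in T1.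
set S := \sum_(k <- A) Num.sg (c k) *: e k in T1.
have hsg : forall k, k \in A -> `|Num.sg (c k)| = 1.
  move=> k kA; rewrite normr_sg; have := cA k kA; by rewrite normr_eq0 => ->.
have T2 : h_l e j.+1 <= 2 * K * `|S|.
  have := @hl_lb A uA; rewrite sA => h; apply: (le_trans h).
  have -> : \sum_(k <- A) e k =
     \sum_(k <- [seq x <- A | 0 < c x]) Num.sg (c k) *: e k -
     \sum_(k <- [seq x <- A | c x < 0]) Num.sg (c k) *: e k.
    rewrite !big_filter (bigID (fun k => 0 < c k)) /= -sumrN.
    congr (_ + _); first by apply: eq_bigr => k /gtr0_sg ->; rewrite scale1r.
    rewrite big_seq_cond [RHS]big_seq_cond; apply: eq_big => k.
      case kA: (k \in A) => //=; have := cA k kA.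
      by case: (ltrgt0P (c k)) => // _; rewrite eqxx.
    move=> /andP[kA hk]; have : c k < 0.
      by move: hk (cA k kA); case: (ltrgt0P (c k)) => // _; rewrite eqxx.
    by move/ltr0_sg ->; rewrite scaleN1r opprK.
  rewrite (le_trans (ler_normB _ _)) // -mulrA mulr_natl mulr2n.
  by apply: lerD; apply: part_le.
apply: (le_trans (ler_wpM2l (ltW tpos) T2)).
rewrite mulrCA (le_trans (ler_wpM2l _ T1)) //.
  by apply: mulr_ge0 => //; exact: ltW.
have -> : 2 * K * (2 * K * `|y|) = 4 * K ^+ 2 * `|y| by ring.
by [].
Qed.


Lemma pw_le (c : nat -> R) (l : seq nat) i j :
  pairwise (fun i j => `|c j| <= `|c i|) l -> (i <= j)%N -> (j < size l)%N ->
  `|c (nth 0%N l j)| <= `|c (nth 0%N l i)|.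
Proof.
move=> pw ij jl; move: ij; rewrite leq_eqVlt => /orP[/eqP ->//|lt].
by move/pairwiseP: pw => /(_ 0%N i j); apply; rewrite ?inE // (ltn_trans lt jl).
Qed.

Lemma pw_head (c : nat -> R) (l : seq nat) k :
  pairwise (fun i j => `|c j| <= `|c i|) l -> k \in l -> `|c k| <= `|c (nth 0%N l 0)|.
Proof.
move=> pw kl; rewrite -(nth_index 0%N kl); apply: pw_le => //; by rewrite index_mem.
Qed.

Lemma MF (c : nat -> R) M (sa : seq nat) :
  (forall k, (M <= k)%N -> c k = 0) -> perm_eq sa (iota 0 M) ->
  pairwise (fun i j => `|c j| <= `|c i|) sa ->
  forall L : seq nat, uniq L -> pairwise (fun i j => `|c j| <= `|c i|) L ->
  `|\sum_(k <- L) c k *: e k| <=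
    16 * K ^+ 3 * (\sum_(1 <= k < (size L).+1) (mu e k / k%:R)) *
    `|\sum_(k < M) c k *: e k|.
Proof.
move=> hc ps pws L.
set y := \sum_(k < M) c k *: e k.
have K0 := Kpos.
have y0 := normr_ge0 y.
have ss : size sa = M by rewrite (perm_size ps) size_iota.
have Hge0 : forall n, 0 <= \sum_(1 <= k < n.+1) (mu e k / k%:R).
  by move=> n; apply: sumr_ge0 => k _; rewrite divr_ge0 ?mu_ge0.
have [n] := ubnP (size L); elim: n L => // n IH L sLn uL pwL.
case: (posnP (size L)) => [/size0nil ->|sL0].
  by rewrite big_nil normr0 mulr_ge0 // mulr_ge0 // mulr_ge0 // exprn_ge0 // ltW.
set sL := size L.
pose p := sL./2.
have pL : (p < sL)%N by apply: half_lt.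
have hsr : (sL - p <= p.+1)%N by apply: half_rest.
pose top := take p L; pose rest := drop p L.
have stop : size top = p by rewrite size_takel // ltnW.
have srest : size rest = (sL - p)%N by rewrite size_drop.
have uLc : uniq (top ++ rest) by rewrite cat_take_drop.
move: (uLc); rewrite cat_uniq => /and3P[utop /hasPn dtr urest].
have -> : \sum_(k <- L) c k *: e k = \sum_(k <- top) c k *: e k + \sum_(k <- rest) c k *: e k.
  by rewrite -big_cat cat_take_drop.
set t := `|c (nth 0%N L p)|.
have t0 : 0 <= t by apply: normr_ge0.
have restle : forall k, k \in rest -> `|c k| <= t.
  move=> k kr; rewrite /t -(addn0 p) -nth_drop; apply: pw_head => //; exact: pw_drop.
have Tt : t * h_l e p.+1 <= 4 * K ^+ 2 * `|y|.
  have := t0; rewrite le_eqVlt => /orP[/eqP <-|tpos].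
    by rewrite mul0r mulr_ge0 // mulr_ge0 // exprn_ge0 // ltW.
  pose W := take p.+1 L.
  have uW : uniq W by rewrite take_uniq.
  have sW : size W = p.+1 by rewrite size_takel.
  have Wt : forall w, w \in W -> t <= `|c w|.
    move=> w wW; have wi := index_ltn wW; have wL : w \in L := mem_take wW.
    rewrite -(nth_index 0%N wL); by apply: pw_le => //; rewrite -ltnS.
  have Wsa : forall w, w \in W -> w \in sa.
    move=> w wW; rewrite (perm_mem ps) mem_iota /= add0n ltnNge; apply/negP => /hc cw.
    by have := Wt w wW; rewrite cw normr0 => /(lt_le_trans tpos); rewrite ltxx.
  have [w wW wn] : exists2 w, w \in W & w \notin take p sa.
    apply/allPn; apply/negP => /allP hall.
    have := uniq_leq_size uW hall; rewrite sW size_take.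
    case: ifP => [_|/negbT]; first by rewrite ltnn.
    by rewrite -leqNgt => h1 h2; have := leq_trans h2 h1; rewrite ltnn.
  have wsa := Wsa w wW.
  have qM : (index w sa < M)%N by rewrite -ss index_mem.
  have pq : (p <= index w sa)%N.
    rewrite leqNgt; apply/negP => qp; move/negP: wn; apply.
    rewrite -(nth_index 0%N wsa) -(nth_take 0%N qp); apply: mem_nth.
    by rewrite size_take; case: ifP => // _; rewrite index_mem.
  have tle : t <= `|c (nth 0%N sa p)|.
    apply: (le_trans (Wt w wW)); rewrite -{1}(nth_index 0%N wsa).
    by apply: pw_le => //; rewrite ss.
  have := @TL c M sa p hc ps pws (leq_ltn_trans pq qM).
  apply: le_trans; apply: ler_wpM2r => //; exact: ltW (@hl_pos p.+1 isT).
have hr0 := hr_ge0 p.+1.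
have ext : forall P, uniq P -> {subset P <= rest} -> `|\sum_(k <- P) e k| <= K * h_r e p.+1.
  move=> P uP sP; apply: (@ext_le P top) => //.
  - by move=> k /sP /dtr.
  - by rewrite (leq_trans (uniq_leq_size uP sP)) // srest.
  - case: (P) => [|k P']; [by right|left]; by rewrite stop /= addSn ltnS leq_addl.
have Rb : `|\sum_(k <- rest) c k *: e k| <= t * (2 * K * h_r e p.+1).
  have -> : \sum_(k <- rest) c k *: e k = \sum_(k <- rest) `|c k| *: (Num.sg (c k) *: e k).
    by apply: eq_bigr => k _; rewrite scalerA mulrC mulr_sg_norm.
  apply: Abel_pre => //.
  - by rewrite mulr_ge0 // mulr_ge0 // ltW.
  - by apply: pw_drop.
  - by move=> k kr; rewrite normr_ge0 restle.
  - move=> j; rewrite sg_split (le_trans (ler_normB _ _)) // -mulrA mulr_natl mulr2n.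
    by apply: lerD; apply: ext; rewrite ?filter_uniq ?take_uniq // => k;
      rewrite mem_filter => /andP[_ /mem_take].
have hr := @hr_le_mu p.+1 p.+1 isT (leqnn _).
have mu0 := mu_ge0 p.+1.
have Rb2 : `|\sum_(k <- rest) c k *: e k| <= 8 * K ^+ 3 * mu e p.+1 * `|y|.
  apply: (le_trans Rb).
  have : t * (2 * K * h_r e p.+1) <= 2 * K * mu e p.+1 * (t * h_l e p.+1).
    have -> : 2 * K * mu e p.+1 * (t * h_l e p.+1) = t * (2 * K * (mu e p.+1 * h_l e p.+1)) by ring.
    apply: ler_wpM2l => //; apply: ler_wpM2l => //; by rewrite mulr_ge0 // ltW.
  move/le_trans; apply.
  have h2 : 0 <= 2 * K * mu e p.+1 by rewrite mulr_ge0 // mulr_ge0 // ltW.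
  apply: (le_trans (ler_wpM2l h2 Tt)).
  have -> : 2 * K * mu e p.+1 * (4 * K ^+ 2 * `|y|) = 8 * K ^+ 3 * mu e p.+1 * `|y| by ring.
  by [].
have Tb : `|\sum_(k <- top) c k *: e k| <=
    16 * K ^+ 3 * (\sum_(1 <= k < p.+1) (mu e k / k%:R)) * `|y|.
  rewrite -stop; apply: IH => //; last by apply: pw_take.
  by rewrite stop; apply: (leq_trans pL); rewrite -ltnS.
have HH : \sum_(1 <= k < p.+1) (mu e k / k%:R) + mu e p.+1 / 2 <=
    \sum_(1 <= k < sL.+1) (mu e k / k%:R).
  rewrite [X in _ <= X](@big_cat_nat _ _ _ p.+1) //= ?ltnS ?(ltnW pL) // lerD2l.
  apply: (@le_trans _ _ (\sum_(p.+1 <= k < sL.+1) (mu e p.+1 / sL%:R))).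
    rewrite sumr_const_nat -[_ *+ (_ - _)]mulr_natr -mulrA; apply: ler_wpM2l => //.
    have sLpos : 0 < (sL%:R : R) by rewrite ltr0n.
    rewrite mulrC ler_pdivlMr //.
    have : (sL%:R : R) <= 2 * (sL.+1 - p.+1)%:R.
      by rewrite -natrM ler_nat; apply: half_aux.
    move=> h; lra.
  apply: ler_sum_nat => k /andP[pk kL].
  have k0 : (0 < k)%N by apply: leq_trans pk.
  apply: (@le_trans _ _ (mu e p.+1 / k%:R)).
    apply: ler_wpM2l => //; rewrite lef_pV2 ?posrE ?ltr0n // ler_nat -ltnS //.
  apply: ler_wpM2r; first by rewrite invr_ge0 ler0n.
  exact: mu_mono.
apply: (le_trans (ler_normD _ _)).
apply: (le_trans (lerD Tb Rb2)).
have -> : 16 * K ^+ 3 * (\sum_(1 <= k < p.+1) (mu e k / k%:R)) * `|y| +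
   8 * K ^+ 3 * mu e p.+1 * `|y| =
   16 * K ^+ 3 * (\sum_(1 <= k < p.+1) (mu e k / k%:R) + mu e p.+1 / 2) * `|y| by field.
apply: ler_wpM2r => //; apply: ler_wpM2l => //.
by rewrite mulr_ge0 // exprn_ge0 // ltW.
Qed.

End S.

Theorem lemma2p3 (R : realType) (V : completeNormedModType R)
  (e : nat -> V) (a : V -> nat -> R) (K : R) :
  is_basis_coefs e a -> seminormalized e -> quasi_greedy e a ->
  qg_constant e a K ->
  exists C : R, 0 < C /\
    forall (G : seq nat) (x : V), uniq G ->
      `|S_proj e a G x| <=
        C * (8 * K ^+ 4) *
        (\sum_(1 <= k < (size G).+1) (mu e k / k%:R)) * `|x|.
Proof.
move=> hB [c1 [c2 [c1p hce]]] _ [hQG _].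
have K0 : 0 < K := @Kpos R V e a K hB hQG c1 c2 c1p hce.
exists (2 / K); split; first by rewrite divr_gt0.
move=> G x uG.
have -> : 2 / K * (8 * K ^+ 4) = 16 * K ^+ 3 by field; rewrite gt_eqF.
set H := \sum_(1 <= k < (size G).+1) (mu e k / k%:R).
have key : forall M, (\max_(k <- G) k < M)%N ->
    `|S_proj e a G x| <= 16 * K ^+ 3 * H * `|partial_sum e (a x) M|.
  move=> M hM.
  pose c k := if (k < M)%N then a x k else 0.
  have hc : forall k, (M <= k)%N -> c k = 0 by move=> k; rewrite /c ltnNge => ->.
  pose rr := fun i j => `|c j| <= `|c i|.
  have tot : total rr by move=> i j; apply: le_total.
  have tr : transitive rr by move=> j i k h1 h2; exact: le_trans h2 h1.
  have ps : perm_eq (sort rr (iota 0 M)) (iota 0 M) by rewrite perm_sort.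
  have pws : pairwise rr (sort rr (iota 0 M)) by rewrite -sorted_pairwise // sort_sorted.
  have := @MF R V e a K hB hQG c1 c2 c1p hce c M _ hc ps pws (sort rr G).
  rewrite sort_uniq uG -sorted_pairwise // sort_sorted // size_sort => /(_ isT isT).
  have -> : \sum_(k <- sort rr G) c k *: e k = S_proj e a G x.
    rewrite (perm_big G) ?perm_sort // /S_proj; apply: eq_big_seq => k kG.
    by rewrite /c (leq_ltn_trans (@leq_bigmax_seq _ _ xpredT (fun k => k) k kG isT) hM).
  have -> // : \sum_(k < M) c k *: e k = partial_sum e (a x) M.
  by apply: eq_bigr => i _; rewrite /c ltn_ord.
have cv : ((fun M => 16 * K ^+ 3 * H * `|partial_sum e (a x) M|) @ \oo -->
    16 * K ^+ 3 * H * `|x|)%classic.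
  apply: cvgMl_tmp; apply: cvg_norm; exact: hB.1 x.
rewrite -(cvg_lim _ cv); last exact: Rhausdorff.
apply: limr_ge; first by apply/cvg_ex; eexists; exact: cv.
near=> M; apply: key; near: M; exists (\max_(k <- G) k).+1 => // M.
Unshelve. all: by end_near.
Qed.
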